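(* In the lower-bound instance for CTS-G described in the context, for any round $t>T/2$ and any sub-optimal base arm $a\in B_t$, we have $\Pr(w_{a,t}\ge\tau\mid\mathcal{F}_{t-1})\ge0.15$, where $\tau:=\Delta+\Delta/4$.
   Context: Top-$m$ instance: $N$ base arms with $N\ge400m$, $m\ge1$; every round any $m$ of the $N$ arms may be played. A set $G\subset[N]$ with $|G|=m$ is fixed; rewards are deterministic: $r_a=\Delta$ for $a\in G$ and $r_a=0$ otherwise, with $\Delta:=\frac45\sqrt{\frac{N\ln T}{T}}$ and $T>\frac{16}{25}N\ln T$. The agent runs CTS-G with $\gamma=1$: in round $t$ draw independently $w_{a,t}\sim\mathcal{N}\big(\hat r_{a,n_{a,t}},\frac{m\ln t}{n_{a,t}+1}\big)$ and play the $m$ arms with largest $w_{a,t}$; $n_{a,t}$ is the number of plays of $a$ in rounds $1,\dots,t-1$, $\hat r_{a,n_{a,t}}$ its empirical mean ($0$ if unplayed). $\mathcal{F}_{t-1}$ is the history up to the end of round $t-1$. $L:=\frac{16m\ln(T/2)}{25\Delta^2}-1$ and $B_t:=\{a\in[N]\setminus G: n_{a,t}\le L\}$. *)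

(* Defs.v *)
From HB Require Import structures.
From mathcomp Require Import all_boot all_order all_algebra.
From mathcomp Require Import all_classical all_reals all_analysis.
From mathcomp Require Import normal_distribution.
Set Implicit Arguments. Unset Strict Implicit. Unset Printing Implicit Defensive.
Import Order.TTheory GRing.Theory Num.Theory.
Local Open Scope ring_scope.

Definition gapDelta {R : realType} (N T : nat) : R :=
  4 / 5 * Num.sqrt (N%:R * ln (T%:R : R) / T%:R).

Definition Lbound {R : realType} (m N T : nat) : R :=
  16 * m%:R * ln (T%:R / 2 : R) / (25 * (gapDelta N T) ^+ 2) - 1.

Definition reward {R : realType} (N : nat) (G : {set 'I_N}) (Delta : R)
  (a : 'I_N) : R := if a \in G then Delta else 0.

(* S s = set of m arms played in round s (s = 1, 2, ...).
   n_{a,t} = number of plays of a in rounds 1..t-1. *)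
Definition npulls (N : nat) (S : nat -> {set 'I_N}) (a : 'I_N) (t : nat) : nat :=
  \sum_(1 <= s < t | a \in S s) 1.

Definition emp_mean {R : realType} (N : nat) (G : {set 'I_N}) (Delta : R)
  (S : nat -> {set 'I_N}) (a : 'I_N) (t : nat) : R :=
  if npulls S a t == 0%N then 0
  else (\sum_(1 <= s < t | a \in S s) reward G Delta a) / (npulls S a t)%:R.

(* Conditional law of w_{a,t} given F_{t-1} under CTS-G with gamma = 1:
   N(hat r_{a,n_{a,t}}, m ln t / (n_{a,t} + 1)); normal_prob takes the
   mean and the standard deviation. *)
Definition ctsg_sample_law {R : realType} (N m : nat) (G : {set 'I_N}) (Delta : R)
  (S : nat -> {set 'I_N}) (a : 'I_N) (t : nat) : set R -> \bar R :=
  normal_prob (emp_mean G Delta S a t)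
    (Num.sqrt (m%:R * ln (t%:R : R) / (npulls S a t).+1%:R)).

(* Main.v *)
Require Import Defs.
From HB Require Import structures.
From mathcomp Require Import all_boot all_order all_algebra.
From mathcomp Require Import all_classical all_reals all_analysis.
From mathcomp Require Import normal_distribution measurable_realfun.
Import Order.TTheory GRing.Theory Num.Theory.
Local Open Scope ring_scope.
Import numFieldNormedType.Exports.
From mathcomp Require Import lra ring zify.

Section Aux.
Local Open Scope classical_set_scope.
Lemma B (R : realType) (a F c1 c2 x : R) : 0 < a -> 0 < F -> 10 <= c1 -> 9 <= c2 -> x = 3/2 ->
  0 < 1 * a / F + -1 * (x * (x * a)) / (c1 * (c2 * F)).
Proof.
move=> a0 F0 c1g c2g ->.
have -> : 1 * a / F + -1 * (3/2 * (3/2 * a)) / (c1 * (c2 * F)) = a / F * (1 - 9/4 / (c1 * c2)).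
  field; apply/and3P; split; apply/negP => /eqP H; lra.
apply: mulr_gt0; first exact: divr_gt0.
rewrite subr_gt0 ltr_pdivrMr; last by rewrite mulr_gt0 //; lra.
have : 90 <= c1 * c2.
  have -> : 90 = 10 * 9 :> R by lra.
  by apply: ler_pM => //; lra.
lra.
Qed.
Lemma A k : (4 <= k)%N -> (10 <= k.*2.+2)%N /\ (9 <= k.*2.+1)%N.
Proof. move=> h; split; rewrite -addnn; lia. Qed.
Lemma pr (R : realType) d : 0 < cos_coeff' (3/2 : R) (4 + d.*2)%N + cos_coeff' (3/2 : R) (4 + d.*2.+1)%N.
Proof.
rewrite /cos_coeff' addnS; set k := (4 + d.*2)%N.
have ok : odd k = false by rewrite /k oddD odd_double.
have k4 : (4 <= k)%N by rewrite /k leq_addr.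
clearbody k.
rewrite -!exprnP.
have e1 : (-1) ^+ k = 1 :> R by rewrite -signr_odd ok.
have e2 : (-1) ^+ k.+1 = -1 :> R by rewrite exprS e1 mulr1.
rewrite e1 e2.
rewrite doubleS !factS !natrM !exprS.
have [h1 h2] := A _ k4.
apply: B => //.
- by rewrite (ler_nat R 10).
- by rewrite (ler_nat R 9).
Qed.
Lemma cos32_gt0 (R : realType) : 0 < cos (3/2 : R).
Proof.
have h := @cvg_cos_coeff' R (3/2); rewrite -(cvg_lim (@Rhausdorff R) h).
apply: (@lt_trans _ _ (\sum_(0 <= i < 4) cos_coeff' (3/2 : R) i)).
  rewrite !big_nat_recr//= big_nil add0r /cos_coeff'.
  rewrite -!exprnP /= !exprS !expr0.
  rewrite (_ : (0.*2)`! = 1)// (_ : (1.*2)`! = 2)// (_ : (2.*2)`! = 24)// (_ : (3.*2)`! = 720)//.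
  lra.
apply: lt_sum_lim_series; first by move/cvgP in h.
move=> d; exact: pr.
Qed.
Lemma pi_ge3 (R : realType) : 3 <= (pi : R).
Proof.
have /IVT[] : Num.min (cos (3/2 : R)) (cos 2) <= (0 : R) <= Num.max (cos (3/2)) (cos 2).
  - by rewrite le_max (ltW (cos32_gt0 R)) ge_min (ltW (@cos2_lt0 R)) orbC.
  - lra.
  - by apply/continuous_subspaceT => ?; exact: continuous_cos.
move=> x /itvP xI cx0.
have [pih cpih] := @pihalf_02_cos_pihalf R.
have := @cos_02_uniq R (pi / 2) x pih cpih.
have x1 : 3/2 <= x by rewrite xI.
have x2 : x <= 2 by rewrite xI.
move=> /(_ _ cx0) => H.
have {}H : pi / 2 = x by apply: H; apply/andP; split; lra.
lra.
Qed.
Lemma expN_le (R : realType) (y : R) : 0 <= y <= 1 ->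
  expR (- y) <= 1 - y + y ^+ 2 / 2 - y ^+ 3 / 6 + y ^+ 4 / 24.
Proof.
move=> /andP[y0 y1].
have [->|yp] := eqVneq y 0.
  rewrite oppr0 expR0; lra.
have ypos : 0 < y by rewrite lt_neqAle eq_sym yp y0.
rewrite -lerN2.
have /cvgN h := is_cvg_series_exp_coeff (- y).
rewrite /expR -(cvg_lim (@Rhausdorff R) h).
apply: ltW.
rewrite -seriesN.
apply: (@le_lt_trans _ _ (\sum_(0 <= i < 5) (- exp_coeff (- y)) i)).
  rewrite !big_nat_recr//= big_nil add0r.
  rewrite /exp_coeff /= !fctE /= !exprS !expr0.
  rewrite (_ : 0`! = 1)// (_ : 1`! = 1)// (_ : 2`! = 2)// (_ : 3`! = 6)// (_ : 4`! = 24)//.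
  by rewrite le_eqVlt; apply/orP; left; apply/eqP; field.
apply: lt_sum_lim_series; first by move/cvgP in h; rewrite seriesN.
move=> d; rewrite addnS; set k := (5 + d.*2)%N.
have ok : odd k = true by rewrite /k oddD odd_double.
have k5 : (5 <= k)%N by rewrite /k leq_addr.
clearbody k.
have E i : (- exp_coeff (- y)) i = - ((- y) ^+ i / i`!%:R) by [].
rewrite !E !(exprNn y).
have e1 : (-1) ^+ k = -1 :> R by rewrite -signr_odd ok.
have e2 : (-1) ^+ k.+1 = 1 :> R by rewrite exprS e1 mulrN1 opprK.
rewrite e1 e2 !factS natrM [y ^+ k.+1]exprS.
set a := y ^+ k; set F := (k`!)%:R; set c1 := (k.+1)%:R.
have F0 : 0 < F by rewrite /F ltr0n fact_gt0.
have c1g : 6 <= c1 by rewrite /c1 ler_nat; lia.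
have a0 : 0 < a by rewrite /a exprn_gt0.
have -> : - (-1 * a / F) + - (1 * (y * a) / (c1 * F)) = a / F * (1 - y / c1).
  field; apply/andP; split; apply/negP => /eqP H; lra.
apply: mulr_gt0; first exact: divr_gt0.
rewrite subr_gt0 ltr_pdivrMr; last by lra.
lra.
Qed.
Lemma poly_integral (R : realType) (P : {poly R}) (a b : R) : a < b ->
  (\int[lebesgue_measure]_(x in `[a, b]) (P^`().[x])%:E = (P.[b] - P.[a])%:E)%E.
Proof.
move=> ab; rewrite EFinB; apply: continuous_FTC2 => //.
- by apply/continuous_subspaceT => ?; exact: continuous_horner.
- split.
  + by move=> x _; exact: derivable_horner.
  + exact/cvg_at_right_filter/continuous_horner.
  + exact/cvg_at_left_filter/continuous_horner.
- by move=> x _; rewrite -derivE.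
Qed.

Lemma Pder (R : realType) (s : R) (s0 : 0 < s) (x : R) :
  let peak := normal_peak s in
  let P : {poly R} := peak *: ('X - (6*s^+2)^-1 *: 'X^3 + (40*s^+4)^-1 *: 'X^5
       - (336*s^+6)^-1 *: 'X^7 + (3456*s^+8)^-1 *: 'X^9) in
  let y := x ^+ 2 / (s ^+ 2 *+ 2) in
  P^`().[x] = peak * (1 - y + y ^+ 2 / 2 - y ^+ 3 / 6 + y ^+ 4 / 24).
Proof.
move=> peak P y.
rewrite /P /y !poly.derivE !hornerE /=.
by field; rewrite gt_eqF.
Qed.

Lemma half_bound (R : realType) (s : R) : 0 < s ->
  (\int[lebesgue_measure]_(x in `[0%R, s[) (normal_pdf 0 s x)%:E <= (35/100 : R)%:E)%E.
Proof.
move=> s0.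
have mf : measurable_fun setT (normal_pdf 0 s) := measurable_normal_pdf 0 s.
rewrite integral_itv_bndo_bndc; last first.
  by apply/measurable_realfun.measurable_EFinP; exact: measurable_funTS mf.
set peak := normal_peak s.
set P : {poly R} := peak *: ('X - (6*s^+2)^-1 *: 'X^3 + (40*s^+4)^-1 *: 'X^5
       - (336*s^+6)^-1 *: 'X^7 + (3456*s^+8)^-1 *: 'X^9).
apply: (@le_trans _ _ (\int[lebesgue_measure]_(x in `[0%R, s]) (P^`().[x])%:E)%E).
  apply: ge0_le_integral => //.
  - by move=> x _; rewrite lee_fin normal_pdf_ge0.
  - by apply/measurable_realfun.measurable_EFinP; exact: measurable_funTS mf.
  - apply/measurable_realfun.measurable_EFinP; apply: measurable_funTS.
    exact: continuous_measurable_fun (@continuous_horner R _).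
  move=> x; rewrite /= in_itv /= => /andP[x0 xs].
  rewrite lee_fin Pder // normal_pdfE ?gt_eqF // /normal_fun subr0.
  rewrite -/peak ler_wpM2l ?normal_peak_ge0 //.
  rewrite (_ : - x ^+ 2 / (s ^+ 2 *+ 2) = - (x ^+ 2 / (s ^+ 2 *+ 2))); last by rewrite mulNr.
  apply: (@expN_le R (x ^+ 2 / (s ^+ 2 *+ 2))).
  apply/andP; split; first by rewrite divr_ge0 ?sqr_ge0 // mulrn_wge0 // sqr_ge0.
  rewrite ler_pdivrMr; last by rewrite mulrn_wgt0 // exprn_gt0.
  have hx : x ^+ 2 <= s ^+ 2.
    by rewrite -subr_ge0 subr_sqr mulr_ge0 // ?subr_ge0 // addr_ge0 // ltW.
  have := sqr_ge0 s; rewrite mul1r mulr2n; lra.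
rewrite poly_integral //.
rewrite lee_fin.
have -> : P.[s] - P.[0] = peak * s * (1 - 1/6 + 1/40 - 1/336 + 1/3456).
  by rewrite /P !hornerE /=; field; rewrite gt_eqF.
rewrite /peak /normal_peak.
set q := Num.sqrt _.
have q2 : q ^+ 2 = s ^+ 2 * pi *+ 2.
  by rewrite sqr_sqrtr // mulrn_wge0 // mulr_ge0 ?sqr_ge0 ?pi_ge0.
have q0 : 0 < q.
  by rewrite sqrtr_gt0 mulrn_wgt0 // mulr_gt0 ?pi_gt0 // exprn_gt0.
have pi3 := pi_ge3 R.
have key : s * (1 - 1/6 + 1/40 - 1/336 + 1/3456) <= 35/100 * q.
  rewrite mulr2n in q2.
  have := sqr_ge0 s.
  nra.
rewrite -mulrA ler_pdivrMl //.
lra.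
Qed.

Lemma tail (R : realType) (s : R) : 0 < s ->
  ((15/100 : R)%:E <= normal_prob 0 s [set x : R | (s <= x)%R])%E.
Proof.
move=> s0.
have sn0 : s != 0 by rewrite gt_eqF.
set f := normal_pdf 0 s.
have fge0 : forall x, 0 <= f x by move=> x; exact: normal_pdf_ge0.
have fc : continuous f := @continuous_normal_pdf R 0 s sn0.
have fev : f =1 f \o -%R.
  by move=> x; rewrite /f /= normal_pdfE // /normal_fun !subr0 sqrrN.
have mf : measurable_fun setT f := measurable_normal_pdf 0 s.
have H12 : (\int[lebesgue_measure]_(x in [set x : R | (0 <= x)%R]) (f x)%:E = (1/2 : R)%:E)%E.
  have := ge0_symfun_integralT fge0 fc fev.
  rewrite integral_normal_pdf.
  have : (0 <= \int[lebesgue_measure]_(x in [set x : R | (0 <= x)%R]) (f x)%:E)%E.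
    by apply: integral_ge0 => x _; rewrite lee_fin.
  case: (\int[lebesgue_measure]_(x in [set x : R | (0 <= x)%R]) (f x)%:E)%E => [r| |] //.
    rewrite lee_fin => _ /eqP; rewrite -EFinM eqe => /eqP h; congr EFin; lra.
  by rewrite mulry /= gtr0_sg // mul1e.
have Hsplit : [set x : R | 0 <= x] = `[0%R, s[ `|` [set x : R | (s <= x)%R].
  apply/seteqP; split => x /=.
    move=> x0; have [xs|xs] := ltP x s; [left | by right].
    by rewrite in_itv /= x0 xs.
  case; first by rewrite in_itv /= => /andP[].
  by apply: le_trans; exact: ltW.
have ms : measurable [set x : R | s <= x] by rewrite -set_itvcy.
rewrite Hsplit ge0_integral_setU //= in H12; last 3 first.
- by apply/measurable_realfun.measurable_EFinP; exact: measurable_funTS mf.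
- by move=> x _; rewrite lee_fin.
- apply/disj_setPS => x [] /=; rewrite in_itv /= => /andP[_ xs] sx.
  by have := lt_le_trans xs sx; rewrite ltxx.
have hb := @half_bound R s s0.
rewrite /normal_prob -/f.
move: H12 hb.
have : (0 <= \int[lebesgue_measure]_(x in `[0%R, s[) (f x)%:E)%E.
  by apply: integral_ge0 => x _; rewrite lee_fin.
have : (0 <= \int[lebesgue_measure]_(x in [set x : R | (s <= x)%R]) (f x)%:E)%E.
  by apply: integral_ge0 => x _; rewrite lee_fin.
case: (\int[lebesgue_measure]_(x in [set x : R | (s <= x)%R]) (f x)%:E)%E => [b| |] //;
case: (\int[lebesgue_measure]_(x in `[0%R, s[) (f x)%:E)%E => [a| |] //.
- rewrite !lee_fin => b0 a0 /eqP; rewrite -EFinD eqe => /eqP h ha.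
  lra.
Qed.

End Aux.

Theorem lemma10 (R : realType) (N m T : nat) (G : {set 'I_N})
  (S : nat -> {set 'I_N}) (t : nat) (a : 'I_N) :
  (1 <= m)%N -> (400 * m <= N)%N -> #|G| = m ->
  (forall s, (1 <= s < t)%N -> #|S s| = m) ->
  (16 / 25 * N%:R * ln (T%:R : R) < T%:R) ->
  (T%:R / 2 < (t%:R : R)) -> (t <= T)%N ->
  a \notin G -> ((npulls S a t)%:R <= Lbound m N T :> R) ->
  ((15 / 100 : R)%:E <=
     ctsg_sample_law m G (gapDelta N T) S a t
       [set x : R | (gapDelta N T + gapDelta N T / 4 <= x)%R])%E.
Proof.
move=> m1 _ _ _ _ tT _ aG hL.
rewrite /ctsg_sample_law.
have -> : emp_mean G (gapDelta N T) S a t = 0 :> R.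
  rewrite /emp_mean; case: ifP => // _.
  rewrite big1 ?mul0r // => i _; by rewrite /reward (negbTE aG).
set D := gapDelta N T.
set n := npulls S a t.
set lh := ln (T%:R / 2 : R).
set lt := ln (t%:R : R).
have D0 : 0 <= D by rewrite /D /gapDelta mulr_ge0 // sqrtr_ge0.
have m0 : (0 : R) < m%:R by rewrite ltr0n.
move: hL; rewrite /Lbound -/D -/lh => hL.
have n1 : (1 : R) <= n.+1%:R by rewrite ler1n.
have hL' : n.+1%:R <= 16 * m%:R * lh / (25 * D ^+ 2).
  by rewrite -addn1 natrD; lra.
have Dp : 0 < D.
  rewrite lt_neqAle D0 andbT; apply/negP => /eqP D0'.
  by move: hL'; rewrite -D0' expr0n /= mulr0 invr0 mulr0; lra.
have D2 : 0 < 25 * D ^+ 2 by rewrite mulr_gt0 // exprn_gt0.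
have hM : 25 * D ^+ 2 * n.+1%:R <= 16 * m%:R * lh.
  by rewrite mulrC -ler_pdivlMr.
have lhp : 0 < lh.
  have : 0 < 16 * m%:R * lh by nra.
  by rewrite -mulrA pmulr_rgt0 // pmulr_rgt0.
have Tp : (0 : R) < T%:R / 2.
  rewrite lt_neqAle divr_ge0 // andbT; apply/negP => /eqP h0.
  by move: lhp; rewrite /lh -h0 ln0 // ltxx.
have tp : (0 : R) < t%:R by apply: lt_trans tT.
have hlt : lh <= lt by rewrite /lh /lt ler_ln ?posrE // ltW.
have ltp : 0 < lt by apply: lt_le_trans hlt.
set s := Num.sqrt _.
have vp : 0 < m%:R * lt / n.+1%:R by rewrite divr_gt0 ?mulr_gt0 //; lra.
have sp : 0 < s by rewrite sqrtr_gt0.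
have hts : D + D / 4 <= s.
  have -> : D + D / 4 = Num.sqrt ((D + D / 4) ^+ 2).
    by rewrite sqrtr_sqr ger0_norm //; lra.
  rewrite ler_sqrt; last exact: ltW.
  rewrite ler_pdivlMr; last lra.
  have : m%:R * lh <= m%:R * lt by rewrite ler_pM2l.
  nra.
apply: (le_trans (@tail R s sp)).
rewrite /normal_prob; apply: ge0_subset_integral => //=.
- by rewrite -set_itvcy.
- by rewrite -set_itvcy.
- apply/measurable_realfun.measurable_EFinP; apply: measurable_funTS.
  exact: measurable_normal_pdf.
- by move=> x _; rewrite lee_fin normal_pdf_ge0.
- by move=> x /= sx; apply: le_trans sx.
Qed.
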